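(* Let $F$ be the distribution function of a random variable $X\ge0$ with $EX=\infty$ such that $F(0)=0$, $F(2)=0.4$, $F(4)=0.8$ and $F(3)<0.48$. Then $F\notin\mathcal{D}^-$.
   Context: For real random variables, $X \le_{st} Y$ means $P(X\le t)\ge P(Y\le t)$ for all $t\in\mathbb{R}$. A distribution function $F_X$ belongs to $\mathcal{D}^-$ if for every $n\in\mathbb{N}$, all $\theta_1,\dots,\theta_n\ge 0$ with $\sum_{i=1}^n\theta_i=1$, and i.i.d. random variables $X_1,\dots,X_n$ with distribution $F_X$, we have $X_1\le_{st}\sum_{i=1}^n\theta_iX_i$. *)

(* Defs.v *)
From HB Require Import structures.
From mathcomp Require Import all_boot all_order all_algebra.
From mathcomp Require Import all_classical all_reals all_analysis.
Set Implicit Arguments. Unset Strict Implicit. Unset Printing Implicit Defensive.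
Import Order.TTheory GRing.Theory Num.Theory.
Local Open Scope classical_set_scope.
Local Open Scope ring_scope.

Definition has_cdf {d} {T : measurableType d} {R : realType}
  (P : probability T R) (X : T -> R) (F : R -> R) : Prop :=
  forall t : R, P (X @^-1` `]-oo, t]) = (F t)%:E.

(* mutual independence of a finite family of real random variables:
   the product rule for all Borel sets (taking B i = setT recovers every
   subfamily) *)
Definition mutually_independent {d} {T : measurableType d} {R : realType}
  (P : probability T R) (n : nat) (Xs : 'I_n -> T -> R) : Prop :=
  forall B : 'I_n -> set R, (forall i, measurable (B i)) ->
    P (\bigcap_(i in [set: 'I_n]) (Xs i @^-1` B i)) =
    (\prod_(i < n) P (Xs i @^-1` B i))%E.

Definition st_le {d} {T : measurableType d} {R : realType}
  (P : probability T R) (X Y : T -> R) : Prop :=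
  forall t : R, (P (Y @^-1` `]-oo, t]) <= P (X @^-1` `]-oo, t]))%E.

(* F belongs to D^- : for every n >= 1 (indices 'I_n.+1, X_1 = index 0),
   weights theta >= 0 summing to 1, and i.i.d. X_1..X_n with distribution F
   (on any probability space), X_1 <=_st sum_i theta_i X_i. *)
Definition in_Dminus {R : realType} (F : R -> R) : Prop :=
  forall (n : nat) (theta : 'I_n.+1 -> R),
    (forall i, 0 <= theta i) -> \sum_(i < n.+1) theta i = 1 ->
    forall (d : measure_display) (T : measurableType d) (P : probability T R)
      (Xs : 'I_n.+1 -> {RV P >-> R}),
      (forall i, has_cdf P (Xs i) F) ->
      mutually_independent P (fun i => (Xs i : T -> R)) ->
      st_le P (Xs ord0) (fun w => \sum_(i < n.+1) theta i * Xs i w).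

(* Main.v *)
Require Import Defs.
From HB Require Import structures.
From mathcomp Require Import all_boot all_order all_algebra.
From mathcomp Require Import all_classical all_reals all_analysis.
From mathcomp Require Import lra.
Import Order.TTheory GRing.Theory Num.Theory.
Local Open Scope classical_set_scope.
Local Open Scope ring_scope.

Section S.
Context d (T : measurableType d) (R : realType) (X : {mfun T >-> R}).
Definition Xfst := fun p : (T * T)%type => X p.1.
Definition Xsnd := fun p : (T * T)%type => X p.2.
Lemma mXfst : measurable_fun setT Xfst.
Proof. exact: measurableT_comp (measurable_funP X) measurable_fst. Qed.
Lemma mXsnd : measurable_fun setT Xsnd.
Proof. exact: measurableT_comp (measurable_funP X) measurable_snd. Qed.
HB.instance Definition _ := isMeasurableFun.Build _ _ _ _ Xfst mXfst.
HB.instance Definition _ := isMeasurableFun.Build _ _ _ _ Xsnd mXsnd.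
Lemma mpre (B : set R) : measurable B -> measurable (X @^-1` B).
Proof. move=> mB. have := measurable_funP X measurableT B mB. by rewrite setTI. Qed.
End S.
Arguments Xfst {d T R}.
Arguments Xsnd {d T R}.
Arguments mpre {d T R}.

Lemma preX1 d (T : measurableType d) (R : realType) (X : {mfun T >-> R}) (B : set R) :
  Xfst X @^-1` B = (X @^-1` B) `*` setT.
Proof. by apply/seteqP; split => -[a b] //=; case. Qed.
Lemma preX2 d (T : measurableType d) (R : realType) (X : {mfun T >-> R}) (B : set R) :
  Xsnd X @^-1` B = setT `*` (X @^-1` B).
Proof. by apply/seteqP; split => -[a b] //=; case. Qed.

Lemma prod2 (R : realType) (f : 'I_2 -> \bar R) (h : (1 < 2)%N) :
  (\prod_(i < 2) f i = f ord0 * f (Ordinal h))%E.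
Proof.
rewrite big_ord_recl big_ord1; congr (_ * f _)%E; exact: val_inj.
Qed.

Lemma pre_itv (R : realType) (T : Type) (X : T -> R) (k : R) w :
  (X @^-1` `]-oo, k]) w <-> X w <= k.
Proof. rewrite /preimage /= in_itv /=. by []. Qed.

Theorem mainTheorem11 (R : realType) (d : measure_display) (T : measurableType d)
  (P : probability T R) (X : {RV P >-> R}) (F : R -> R) :
  (forall w, 0 <= X w) ->
  ('E_P[X] = +oo)%E ->
  has_cdf P X F ->
  F 0 = 0 -> F 2 = 2 / 5 -> F 4 = 4 / 5 -> F 3 < 12 / 25 ->
  ~ in_Dminus F.
Proof.
move=> _ _ hF F0 F2 F4 F3 HD.
pose PP : probability (T * T)%type R := (P \x P)%E.
have PP1 A : measurable A -> PP (A `*` setT) = P A.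
  move=> mA; rewrite /PP /= product_measure1E //.
  by rewrite -[RHS]mule1; congr (_ * _)%E; exact: probability_setT.
have PP2 A : measurable A -> PP (setT `*` A) = P A.
  move=> mA; rewrite /PP /= product_measure1E //.
  by rewrite -[RHS]mul1e; congr (_ * _)%E; exact: probability_setT.
pose Xs : 'I_2 -> {RV PP >-> R} := fun i => if val i == 0%N then (Xfst X : {RV PP >-> R}) else (Xsnd X : {RV PP >-> R}).
pose theta : 'I_2 -> R := fun _ => 2^-1.
have := HD 1%N theta _ _ _ _ PP Xs _ _ 3.
move=> H.
have i1 : (1 < 2)%N by [].
have H1 : forall i, 0 <= theta i by move=> i; rewrite /theta invr_ge0.
have H2 : \sum_(i < 2) theta i = 1 by rewrite big_ord_recl big_ord1 /theta; lra.
have H3 : forall i, has_cdf PP (Xs i) F.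
  move=> i t; case: i => [[|[|//]]] ? /=.
  - by rewrite preX1 PP1 ?hF //; apply: mpre; exact: measurable_itv.
  - by rewrite preX2 PP2 ?hF //; apply: mpre; exact: measurable_itv.
have H4 : mutually_independent PP (fun i => (Xs i : T * T -> R)).
  move=> B mB.
  have -> : \bigcap_(i in [set: 'I_2]) (Xs i @^-1` B i) =
     (X @^-1` B ord0) `*` (X @^-1` B (Ordinal i1)).
    apply/seteqP; split => [[a b] h|[a b] [h0 h1] i _].
    - by split; [exact: (h ord0 I) | exact: (h (Ordinal i1) I)].
    - case: i => [[|[|//]]] Hi /=.
      + by have -> : Ordinal Hi = ord0 by exact: val_inj.
      + by have -> : Ordinal Hi = Ordinal i1 by exact: val_inj.
  rewrite (prod2 _ _ i1) /Xs /= preX1 preX2 PP1 ?PP2; try (apply: mpre; exact: mB).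
  by rewrite /PP /= product_measure1E //; apply: mpre; exact: mB.
have Hle := H H1 H2 H3 H4.
have R0 : PP (Xs ord0 @^-1` `]-oo, 3]) = (F 3)%:E.
  by rewrite /Xs /= preX1 PP1 ?hF //; apply: mpre; exact: measurable_itv.
rewrite R0 in Hle.
pose A k := X @^-1` `]-oo, k].
have mA k : measurable (A k) by apply: mpre; exact: measurable_itv.
have PA k : P (A k) = (F k)%:E by exact: hF.
pose S := (A 2 `*` A 4) `|` ((A 4 `\` A 2) `*` A 2).
pose Y := (fun w : T * T => \sum_(i < 2) theta i * Xs i w).
have eqY : Y = (fun w => 2^-1 * X w.1 + 2^-1 * X w.2).
  by apply: funext => w; rewrite /Y big_ord_recl big_ord1 /theta /Xs /=.
have mY : measurable_fun setT Y.
  rewrite eqY; apply: measurable_realfun.measurable_funD; apply: measurable_realfun.measurable_funM => //.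
  - exact: measurableT_comp (measurable_funP X) measurable_fst.
  - exact: measurableT_comp (measurable_funP X) measurable_snd.
have mYp : measurable (Y @^-1` `]-oo, 3]).
  have := mY measurableT _ (measurable_itv `]-oo, 3]).
  by rewrite setTI.
have A24 : A 2 `<=` A 4.
  by rewrite /A /preimage => a /=; rewrite !in_itv /=; lra.
have SY : S `<=` Y @^-1` `]-oo, 3].
  rewrite /S /A /preimage => -[a b] /=; rewrite !in_itv /= eqY /=.
  by case=> [[h1 h2]|[[h1 _] h2]]; lra.
have mS : measurable S.
  apply: measurableU; apply: measurableX => //; exact: measurableD.
have PD : P (A 4 `\` A 2) = (F 4 - F 2)%:E.
  rewrite measureD //; last first.
    by apply: (@le_lt_trans _ _ 1%E); [exact: probability_le1 | exact: ltry].
  rewrite setIidr // EFinB; congr (_ - _)%E; exact: PA.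
have E1 : PP (A 2 `*` A 4) = (F 2 * F 4)%:E.
  rewrite /PP /= product_measure1E // EFinM; congr (_ * _)%E; exact: PA.
have E2 : PP ((A 4 `\` A 2) `*` A 2) = ((F 4 - F 2) * F 2)%:E.
  rewrite /PP /= product_measure1E //; last exact: measurableD.
  rewrite EFinM; congr (_ * _)%E; [exact: PD | exact: PA].
have PS : PP S = (12 / 25)%:E.
  rewrite measureU; [|exact: measurableX|apply: measurableX => //; exact: measurableD|].
  - rewrite (_ : (12 / 25)%:E = ((F 2 * F 4)%:E + ((F 4 - F 2) * F 2)%:E)%E).
      by congr (_ + _)%E; [exact: E1|exact: E2].
    by rewrite -EFinD F2 F4; congr (_%:E); lra.
  - by apply/seteqP; split => [[a b] [[h1 h2] [[h3 h4] h5]]|//].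
have h : (PP S <= PP (Y @^-1` `]-oo, 3%R]))%E.
  by apply: le_measure => //; rewrite inE.
rewrite PS in h.
have := le_trans h Hle.
rewrite lee_fin; lra.
Qed.
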